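(* Let $p$ be an odd prime and $G$ an extraspecial $p$-group of exponent $p^2$. Let $V,B,T,Q$ be as in the context and let $\mathcal B=\{v_1,w_1,\dots,v_n,w_n\}$ be a special symplectic basis for $(B,T)$. (i) If $v,w\in V\setminus\{0\}$ are distinct with $T(v)=T(w)$, and either both $v,w\notin\ker(T)$ or both $v,w\notin\mathrm{span}(w_1)$, then $v$ and $w$ lie in the same $Q$-orbit. (ii) If $|G|=p^3$, the action of $Q$ on $V\setminus\{0\}$ has exactly $2p-2$ orbits, represented by $av_1$ and $bw_1$ with $a,b\in GF(p)\setminus\{0\}$. (iii) If $|G|>p^3$, the action of $Q$ on $V\setminus\{0\}$ has exactly $2p-1$ orbits, represented by $av_1$, $bw_1$ ($a,b\in GF(p)\setminus\{0\}$) and $v_2$.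
   Context: A special $p$-group is a finite $p$-group whose center, derived subgroup and Frattini subgroup coincide and are elementary abelian; it is extraspecial if $|Z(G)|=p$. Here $V=G/Z(G)$ is a $GF(p)$-vector space, $Z(G)$ is identified with $GF(p)$, $B:V\times V\to GF(p)$ is the nondegenerate alternating form $B(gZ(G),hZ(G))=[g,h]=ghg^{-1}h^{-1}$, and $T:V\to GF(p)$ is the linear map $T(gZ(G))=g^p$ (nonzero since $\exp(G)=p^2$). A special symplectic basis is a basis $\{v_1,w_1,\dots,v_n,w_n\}$ of $V$ with $B(v_i,w_i)=1$, $B(v_i,w_j)=B(v_i,v_j)=B(w_i,w_j)=0$ for $i\ne j$, $T(v_1)=1$ and $T(u)=0$ for all other basis vectors $u$; such a basis exists. $\mathrm{Aut}_{Z(G)}(G)$ is the group of automorphisms of $G$ acting trivially on $Z(G)$, for such $\varphi$ the map $f_\varphi:V\to V$ is $f_\varphi(gZ(G))=\varphi(g)Z(G)$, and $Q=\{f_\varphi:\varphi\in\mathrm{Aut}_{Z(G)}(G)\}$ acts on $V$ by $(f,v)\mapsto f(v)$. *)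

(* Defs.v *)
From mathcomp Require Import all_boot all_fingroup all_solvable.
Set Implicit Arguments. Unset Strict Implicit. Unset Printing Implicit Defensive.

Local Open Scope group_scope.

Section ExtraspecialDefs.
Variables (gT : finGroupType) (G : {group gT}) (p : nat).

(* V = G / Z(G), elements are cosets of Z(G); the vector addition of V is the
   (commutative) group law of the quotient, the zero vector is 1, and the scalar
   multiple a.x (a in GF(p) = {0,..,p-1}) is x ^+ a. *)
Local Notation cT := (coset_of 'Z(G)).
Definition Vsp : {set cT} := G / 'Z(G).

(* B(gZ, hZ) = g h g^-1 h^-1, an element of Z(G) (values read through the chosen
   identification of Z(G) with GF(p), see the theorem). *)
Definition Bform (x y : cT) : gT :=
  let g := repr x in let h := repr y in g * h * g^-1 * h^-1.

Definition Tmap (x : cT) : gT := repr x ^+ p.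

(* A special symplectic basis {v_1,w_1,...,v_n,w_n}; v_(i+1) = v i, w_(i+1) = w i
   for i < n.  The element z of Z(G) is the one identified with 1 in GF(p)
   (so z ^+ a corresponds to a, and the identity of gT to 0). *)
Definition lincomb (n : nat) (v w : nat -> cT) (c : {ffun 'I_n -> 'I_p * 'I_p}) : cT :=
  \prod_(i < n) (v i ^+ (c i).1 * w i ^+ (c i).2).
Arguments lincomb n v w c : clear implicits.

Definition special_symplectic_basis (z : gT) (n : nat) (v w : nat -> cT) : Prop :=
  [/\
      [/\ (forall i, i < n -> v i \in Vsp /\ w i \in Vsp),
          injective (lincomb n v w)
        & (forall x, x \in Vsp -> exists c, lincomb n v w c = x)],
      (forall i, i < n -> Bform (v i) (w i) = z),
      (forall i j, i < n -> j < n -> i != j ->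
         [/\ Bform (v i) (w j) = 1, Bform (v i) (v j) = 1 & Bform (w i) (w j) = 1])
    &
      [/\ 0 < n, Tmap (v 0) = z,
          (forall i, 0 < i < n -> Tmap (v i) = 1)
        & (forall i, i < n -> Tmap (w i) = 1)]].

Definition AutZ : {set {perm gT}} :=
  [set f in Aut G | [forall c in 'Z(G), f c == c]].

Definition fphi (f : {perm gT}) : {ffun cT -> cT} :=
  [ffun x : cT => coset 'Z(G) (f (repr x))].

Definition Qgrp : {set {ffun cT -> cT}} := [set fphi f | f in AutZ].

Definition Qorbit (u : cT) : {set cT} := [set (q : {ffun cT -> cT}) u | q in Qgrp].

Definition Qorbits : {set {set cT}} := [set Qorbit u | u in Vsp :\ 1].

End ExtraspecialDefs.

Arguments special_symplectic_basis [gT] G p z n v w.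
Arguments Qorbit [gT] G u.
Arguments lincomb [gT G] p n v w c.

(* Main.v *)
Require Import Defs.
From mathcomp Require Import all_boot all_fingroup all_solvable zify.
Set Implicit Arguments. Unset Strict Implicit. Unset Printing Implicit Defensive.
Local Open Scope group_scope.

Lemma bin2D m n : 'C(m + n, 2) = 'C(m, 2) + 'C(n, 2) + m * n.
Proof.
elim: n => [|n IH]; first by rewrite addn0 bin0n ?muln0 ?addn0.
by rewrite addnS !binS IH !bin1; lia.
Qed.

Lemma dvd_bin2_mul p q : prime p -> odd p -> (p %| 'C(q * p, 2))%N.
Proof.
move=> pr op; have p2 : (2 < p)%N.
  by have := prime_gt1 pr; case: p op {pr} => [|[|[|]]].
elim: q => [|q IH]; first by rewrite mul0n.
rewrite mulSn bin2D dvdn_add // ?dvdn_add //; first by apply: prime_dvd_bin; lia.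
by rewrite dvdn_mulr.
Qed.

Lemma expg_bin2_mod (gT : finGroupType) (x : gT) p n : prime p -> odd p ->
  x ^+ p = 1 -> x ^+ 'C(n %% p, 2) = x ^+ 'C(n, 2).
Proof.
move=> pr op xp; rewrite -(expg_mod _ xp) -[RHS](expg_mod _ xp); congr (x ^+ _).
rewrite {2}(divn_eq n p) bin2D.
have /dvdnP [k ->] := dvd_bin2_mul (n %/ p) pr op.
by rewrite -addnA modnMDl mulnAC -modnDm modnMl addn0 modn_mod.
Qed.


Section Basic.
Variables (gT : finGroupType) (G : {group gT}) (p : nat) (z : gT).
Hypotheses (pr_p : prime p) (odd_p : odd p) (pG : p.-group G)
  (esG : extraspecial G) (zZ : z \in 'Z(G)) (nz1 : z != 1).

Lemma cardZ : #|'Z(G)| = p.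
Proof. exact: card_center_extraspecial. Qed.


Lemma ZZsub : 'Z(G) \subset G. Proof. exact: center_sub. Qed.

Lemma order_z : #[z] = p.
Proof.
have := order_dvdG zZ; rewrite cardZ.
case/primeP: pr_p => _ /[apply] /orP[|/eqP //].
by rewrite order_eq1 (negbTE nz1).
Qed.

Lemma Zcyc : 'Z(G) = <[z]>.
Proof.
apply/eqP; rewrite eq_sym eqEcard cycle_subG zZ /= cardZ -order_z.
by [].
Qed.

Lemma Zexp c : c \in 'Z(G) -> c ^+ p = 1.
Proof. by move=> cZ; apply/eqP; rewrite -order_dvdn -cardZ order_dvdG. Qed.

Lemma zexp : z ^+ p = 1. Proof. exact: Zexp. Qed.

Lemma Zcent c g : c \in 'Z(G) -> g \in G -> commute c g.
Proof. by case/centerP=> _ /[apply]. Qed.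

Lemma powZ g : g \in G -> g ^+ p \in 'Z(G).
Proof.
move=> gG; case: esG => [[<- _] _].
rewrite (Phi_joing pG); apply: mem_gen; apply/setUP; right.
have := Mho_p_elt 1 gG (mem_p_elt pG gG); by rewrite expn1.
Qed.

Lemma commZ g h : g \in G -> h \in G -> [~ g, h] \in 'Z(G).
Proof. by move=> gG hG; case: esG => [[_ <-] _]; apply: mem_commg. Qed.


Lemma ZG c : c \in 'Z(G) -> c \in G.
Proof. by move/(subsetP (center_sub G)). Qed.

Lemma commC g h : g \in G -> h \in G -> forall k, k \in G -> commute k [~ g, h].
Proof. by move=> gG hG k kG; apply: commute_sym; apply: Zcent => //; apply: commZ. Qed.

Lemma commMl g1 g2 h : g1 \in G -> g2 \in G -> h \in G ->
  [~ g1 * g2, h] = [~ g1, h] * [~ g2, h].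
Proof.
move=> g1G g2G hG; rewrite commMgJ; congr (_ * _).
by apply/conjg_fixP/commgP; apply: commute_sym; apply: commC.
Qed.


Lemma commMr g h1 h2 : g \in G -> h1 \in G -> h2 \in G ->
  [~ g, h1 * h2] = [~ g, h1] * [~ g, h2].
Proof.
move=> gG h1G h2G; rewrite commgMJ.
have -> : [~ g, h1] ^ h2 = [~ g, h1].
  by apply/conjg_fixP/commgP; apply: commute_sym; apply: commC.
by apply: commute_sym; apply: Zcent; [apply: commZ|apply: ZG; apply: commZ].
Qed.

Lemma commVl g h : g \in G -> h \in G -> [~ g^-1, h] = [~ g, h]^-1.
Proof. by move=> gG hG; apply: commVg; apply: commC. Qed.

Lemma commVr g h : g \in G -> h \in G -> [~ g, h^-1] = [~ g, h]^-1.
Proof. by move=> gG hG; apply: commgV; apply: commC. Qed.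

Lemma commXl g h k : g \in G -> h \in G -> [~ g ^+ k, h] = [~ g, h] ^+ k.
Proof. by move=> gG hG; apply: commXg; apply: commC. Qed.

Lemma commXr g h k : g \in G -> h \in G -> [~ g, h ^+ k] = [~ g, h] ^+ k.
Proof. by move=> gG hG; apply: commgX; apply: commC. Qed.

Lemma commZl c h : c \in 'Z(G) -> h \in G -> [~ c, h] = 1.
Proof. by move=> cZ hG; apply/eqP/commgP; apply: Zcent. Qed.

Lemma commZr c h : c \in 'Z(G) -> h \in G -> [~ h, c] = 1.
Proof. by move=> cZ hG; apply/eqP/commgP; apply: commute_sym; apply: Zcent. Qed.

Lemma commVV g h : g \in G -> h \in G -> [~ g^-1, h^-1] = [~ g, h].
Proof. by move=> gG hG; rewrite commVl ?groupV // commVr // invgK. Qed.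

Lemma GnormZ : G \subset 'N('Z(G)).
Proof. exact: normal_norm (center_normal G). Qed.

Lemma reprE g : g \in G -> exists2 c, c \in 'Z(G) & repr (coset 'Z(G) g) = c * g.
Proof.
move=> gG; have := mem_repr_coset (coset 'Z(G) g).
rewrite val_coset; last by apply: (subsetP GnormZ).
by case/rcosetP=> c cZ ->; exists c.
Qed.

Lemma reprG x : x \in Vsp G -> repr x \in G.
Proof.
case/morphimP=> g _ gG ->; have [c cZ ->] := reprE gG.
by rewrite groupM // ZG.
Qed.

Lemma VspE x : x \in Vsp G -> coset 'Z(G) (repr x) = x.
Proof. by move=> _; apply: coset_reprK. Qed.

Lemma BformE g h : g \in G -> h \in G ->
  @Bform _ G (coset 'Z(G) g) (coset 'Z(G) h) = [~ g, h].
Proof.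
move=> gG hG; rewrite /Bform.
have [c cZ ->] := reprE gG; have [d dZ ->] := reprE hG.
have cG := ZG cZ; have dG := ZG dZ.
have -> : c * g * (d * h) * (c * g)^-1 * (d * h)^-1 = [~ (c * g)^-1, (d * h)^-1].
  by rewrite /commg /conjg !invgK !mulgA.
rewrite commVV ?groupM // commMl ?groupM // commZl ?mul1g ?groupM //.
by rewrite commMr // commZr ?mul1g.
Qed.

Lemma TmapE g : g \in G -> @Tmap _ G p (coset 'Z(G) g) = g ^+ p.
Proof.
move=> gG; rewrite /Tmap; have [c cZ ->] := reprE gG.
by rewrite expgMn ?(Zexp cZ) ?mul1g //; apply: Zcent.
Qed.


Lemma p_gt2 : (2 < p)%N.
Proof. by have := prime_gt1 pr_p; case: (p) odd_p => [|[|[|]]]. Qed.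

Lemma powM g h : g \in G -> h \in G -> (g * h) ^+ p = g ^+ p * h ^+ p.
Proof.
move=> gG hG; rewrite expMg_Rmul; try by apply: commC.
have /dvdnP [k ->] : (p %| 'C(p, 2))%N by apply: prime_dvd_bin; have := p_gt2; lia.
by rewrite mulnC expgM (Zexp (commZ hG gG)) expg1n mulg1.
Qed.

Lemma z_inj i j : (i < p)%N -> (j < p)%N -> z ^+ i = z ^+ j -> i = j.
Proof.
move=> ip jp /eqP; rewrite eq_expg_mod_order order_z !modn_small //.
by move/eqP.
Qed.

Lemma zpow1 i : (i < p)%N -> z ^+ i = 1 -> i = 0%N.
Proof. by move=> ip e; apply: z_inj => //; rewrite ?e // prime_gt0. Qed.

Lemma inZ c : c \in 'Z(G) -> exists2 i, (i < p)%N & c = z ^+ i.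
Proof.
rewrite Zcyc => /cyclePmin [i]; rewrite order_z => ip ->; by exists i.
Qed.

Definition kf (a u : gT) : nat := odflt 0%N (omap val [pick i : 'I_p | [~ a, u] == z ^+ i]).

Lemma kfP a u : a \in G -> u \in G -> (kf a u < p)%N /\ [~ a, u] = z ^+ kf a u.
Proof.
move=> aG uG; rewrite /kf; case: pickP => [i /eqP -> /=|none]; first by split.
have [j jp e] := inZ (commZ aG uG).
by have := none (Ordinal jp); rewrite /= e eqxx.
Qed.


Lemma kfM a u v : a \in G -> u \in G -> v \in G ->
  kf a (u * v) = ((kf a u + kf a v) %% p)%N.
Proof.
move=> aG uG vG; have [ltu eu] := kfP aG uG; have [ltv ev] := kfP aG vG.
have [ltuv euv] := kfP aG (groupM uG vG).
apply: z_inj => //; first by rewrite ltn_pmod // prime_gt0.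
by rewrite (expg_mod _ zexp) expgD -eu -ev -euv commMr.
Qed.

Definition phif (a : gT) (c : nat) (u : gT) : gT :=
  u * a ^+ (c * kf a u) * z ^+ (c * 'C(kf a u, 2)).

Lemma zcomm n g : g \in G -> commute (z ^+ n) g.
Proof. by move=> gG; apply: Zcent => //; rewrite groupX. Qed.

Lemma phiM a c u v : a \in G -> a ^+ p = 1 -> u \in G -> v \in G ->
  phif a c (u * v) = phif a c u * phif a c v.
Proof.
move=> aG ap uG vG; rewrite /phif kfM //.
set K := kf a u; set L := kf a v.
have acp : (a ^+ c) ^+ p = 1 by rewrite -expgM mulnC expgM ap expg1n.
have zcp : (z ^+ c) ^+ p = 1 by rewrite -expgM mulnC expgM zexp expg1n.
rewrite [a ^+ (c * _)]expgM (expg_mod _ acp) -expgM.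
rewrite [z ^+ (c * _)]expgM (@expg_bin2_mod _ (z ^+ c) p _ pr_p odd_p zcp).
rewrite -expgM bin2D.
have av : a ^+ (c * K) * v = v * a ^+ (c * K) * z ^+ (L * (c * K)).
  have [_ e] := kfP aG vG; rewrite -/L in e.
  by rewrite [z ^+ _]expgM -e -commXl // -mulgA -conjg_mulR -conjgC.
rewrite -!mulgA; congr (u * _).
rewrite [z ^+ (c * 'C(K, 2)) * _]mulgA (zcomm _ vG) -!mulgA.
rewrite [a ^+ (c * K) * (v * _)]mulgA av -!mulgA; congr (v * _).
rewrite [z ^+ (L * _) * _]mulgA -expgD [z ^+ _ * (a ^+ _ * _)]mulgA.
rewrite (zcomm _ (groupX _ aG)) -mulgA -expgD mulgA -expgD mulnDr.
by congr (_ * z ^+ _); lia.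
Qed.


Lemma phiG a c u : a \in G -> u \in G -> phif a c u \in G.
Proof. by move=> aG uG; rewrite /phif !groupM ?groupX ?(ZG zZ). Qed.

Lemma kf0 a u : a \in G -> u \in G -> [~ a, u] = 1 -> kf a u = 0%N.
Proof. by move=> aG uG e; have [lt eu] := kfP aG uG; apply: zpow1 => //; rewrite -eu. Qed.

Lemma phi_fix a c u : a \in G -> u \in G -> [~ a, u] = 1 -> phif a c u = u.
Proof. by move=> aG uG e; rewrite /phif kf0 // !muln0 !expg0 !mulg1. Qed.

Lemma phi1 a c u : a \in G -> u \in G -> phif a c u = 1 -> u = 1.
Proof.
move=> aG uG e.
suff e0 : [~ a, u] = 1 by rewrite phi_fix in e.
move: e; rewrite /phif -mulgA => e.
have wG : a ^+ (c * kf a u) * z ^+ (c * 'C(kf a u, 2)) \in G.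
  by rewrite groupM ?groupX ?(ZG zZ).
have -> : u = (a ^+ (c * kf a u) * z ^+ (c * 'C(kf a u, 2)))^-1.
  by rewrite -[u in LHS](mulgK (a ^+ (c * kf a u) * z ^+ (c * 'C(kf a u, 2)))) e mul1g.
rewrite commVr // commMr ?groupX ?(ZG zZ) // commXr // commgg expg1n mul1g.
by rewrite commZr ?groupX ?invg1 ?(ZG zZ).
Qed.

Lemma autZ_ex a c : a \in G -> a ^+ p = 1 ->
  exists2 f, f \in AutZ G & forall u, u \in G -> f u = phif a c u.
Proof.
move=> aG ap.
have fM : {in G &, {morph phif a c : x y / x * y}}.
  by move=> x y xG yG; apply: phiM.
pose f := Morphism fM.
have injf : 'injm f.
  apply/injmP => x y xG yG e; apply/eqP; rewrite eq_mulgV1; apply/eqP.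
  apply: (phi1 (c := c) aG (groupM xG (groupVr yG))).
  have := morphM f xG (groupVr yG); rewrite morphV //= => ->.
  by move: e => /= ->; rewrite mulgV.
have fG : f @* G = G.
  apply/eqP; rewrite eqEcard card_injm // leqnn andbT.
  by apply/subsetP => y /morphimP [x _ xG ->]; apply: phiG.
exists (aut injf fG); last by move=> u uG; rewrite autE.
rewrite /AutZ inE Aut_aut /=; apply/forall_inP => d dZ.
by rewrite autE ?(ZG dZ) //= phi_fix ?(ZG dZ) ?commZr.
Qed.


Lemma trans_aut a u : a \in G -> a ^+ p = 1 -> u \in G -> [~ a, u] != 1 ->
  exists2 f, f \in AutZ G & exists m, f u = u * a * z ^+ m.
Proof.
move=> aG ap uG nc.
have [Kp eK] := kfP aG uG; set K := kf a u in Kp eK.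
have K0 : (0 < K)%N by rewrite lt0n; apply: contra nc => /eqP K0; rewrite eK K0.
have cop : gcdn K p = 1%N.
  apply/eqP; rewrite gcdnC -/(coprime p K) prime_coprime //.
  by apply/negP => /(dvdn_leq K0); rewrite leqNgt Kp.
case: (egcdnP p K0) => km kn ekm _; rewrite cop in ekm.
have [f fA fE] := autZ_ex km aG ap; exists f => //.
exists (km * 'C(K, 2))%N; rewrite fE // /phif -/K ekm expgD mulnC expgM ap.
by rewrite expg1n mul1g expg1.
Qed.


Local Notation cs := (coset 'Z(G)).
Local Notation TT := (@Tmap _ G p).
Local Notation BB := (@Bform _ G).
Local Notation V := (Vsp G).

Lemma cosetM g h : g \in G -> h \in G -> cs (g * h) = cs g * cs h.
Proof. by move=> gG hG; rewrite morphM ?(subsetP GnormZ). Qed.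

Lemma cosetX g k : g \in G -> cs (g ^+ k) = cs g ^+ k.
Proof. by move=> gG; rewrite morphX ?(subsetP GnormZ). Qed.

Lemma cosetV g : g \in G -> cs (g^-1) = (cs g)^-1.
Proof. by move=> gG; rewrite morphV ?(subsetP GnormZ). Qed.

Lemma VspP x : x \in V -> exists2 g, g \in G & x = cs g.
Proof. by case/morphimP=> g _ gG ->; exists g. Qed.

Lemma csV g : g \in G -> cs g \in V.
Proof. exact: mem_quotient. Qed.

Lemma AutZ_Aut f : f \in AutZ G -> f \in Aut G.
Proof. by rewrite inE => /andP []. Qed.

Lemma AutZ_fix f c : f \in AutZ G -> c \in 'Z(G) -> f c = c.
Proof. by rewrite inE => /andP [_ /forall_inP h] /h /eqP. Qed.

Lemma AutM f g h : f \in Aut G -> g \in G -> h \in G -> f (g * h) = f g * f h.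
Proof. by move=> fA gG hG; have := morphM (autm fA) gG hG; rewrite autmE. Qed.

Lemma AutX f g k : f \in Aut G -> g \in G -> f (g ^+ k) = f g ^+ k.
Proof. by move=> fA gG; have := morphX (autm fA) k gG; rewrite autmE. Qed.

Lemma fphiE f g : f \in AutZ G -> g \in G -> fphi G f (cs g) = cs (f g).
Proof.
move=> fZ gG; rewrite /fphi ffunE; have [c cZ ->] := reprE gG.
by rewrite AutM ?AutZ_Aut ?(ZG cZ) // (AutZ_fix fZ cZ) coset_kerl.
Qed.

Lemma AutZ_closed f g : f \in AutZ G -> g \in G -> f g \in G.
Proof. by move=> fA gG; have fA' := AutZ_Aut fA; exact: (Aut_closed fA' gG). Qed.

Lemma AutZ1 : 1 \in AutZ G.
Proof. by rewrite inE group1; apply/forall_inP => c _; rewrite perm1. Qed.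

Lemma AutZM f1 f2 : f1 \in AutZ G -> f2 \in AutZ G -> f1 * f2 \in AutZ G.
Proof.
move=> h1 h2; rewrite inE groupM ?AutZ_Aut //; apply/forall_inP => c cZ.
by rewrite permM !AutZ_fix.
Qed.

Lemma AutZV f : f \in AutZ G -> f^-1 \in AutZ G.
Proof.
move=> h; rewrite inE groupV AutZ_Aut //; apply/forall_inP => c cZ.
by rewrite -{1}(AutZ_fix h cZ) permK.
Qed.

Lemma QorbitP x y : reflect (exists2 f, f \in AutZ G & y = fphi G f x) (y \in Qorbit G x).
Proof.
apply: (iffP imsetP) => [[q /imsetP [f fA ->] ->]|[f fA ->]]; first by exists f.
by exists (fphi G f) => //; apply: imset_f.
Qed.

Lemma fphiV f x : f \in AutZ G -> x \in V -> fphi G f x \in V.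
Proof.
move=> fA /VspP [g gG ->]; rewrite fphiE //; apply: csV.
exact: AutZ_closed.
Qed.

Lemma fphi_comp f1 f2 x : f1 \in AutZ G -> f2 \in AutZ G -> x \in V ->
  fphi G f2 (fphi G f1 x) = fphi G (f1 * f2) x.
Proof.
move=> h1 h2 /VspP [g gG ->]; rewrite !fphiE ?AutZM ?permM //.
exact: AutZ_closed.
Qed.

Lemma fphi1 x : x \in V -> fphi G 1 x = x.
Proof. by case/VspP => g gG ->; rewrite fphiE ?AutZ1 // perm1. Qed.

Lemma orbit_refl x : x \in V -> x \in Qorbit G x.
Proof. by move=> xV; apply/QorbitP; exists 1; rewrite ?AutZ1 ?fphi1. Qed.

Lemma orbit_sub x y : x \in V -> y \in Qorbit G x -> y \in V.
Proof. by move=> xV /QorbitP [f fA ->]; apply: fphiV. Qed.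

Lemma orbit_trans x y t : x \in V -> y \in Qorbit G x -> t \in Qorbit G y ->
  t \in Qorbit G x.
Proof.
move=> xV /QorbitP [f1 h1 ->] /QorbitP [f2 h2 ->]; apply/QorbitP.
by exists (f1 * f2); rewrite ?AutZM ?fphi_comp.
Qed.

Lemma orbit_sym x y : x \in V -> y \in Qorbit G x -> x \in Qorbit G y.
Proof.
move=> xV /QorbitP [f h ->]; apply/QorbitP; exists f^-1; first exact: AutZV.
by rewrite fphi_comp ?AutZV // mulgV fphi1.
Qed.

Lemma orbit_eq x y : x \in V -> y \in Qorbit G x -> Qorbit G y = Qorbit G x.
Proof.
move=> xV yx; have yV := orbit_sub xV yx.
apply/setP => t; apply/idP/idP => ht; first exact: orbit_trans yx ht.
exact: orbit_trans yV (orbit_sym xV yx) ht.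
Qed.

Lemma TmapV x : x \in V -> TT x \in 'Z(G).
Proof. by case/VspP => g gG ->; rewrite TmapE // powZ. Qed.

Lemma T_inv f x : f \in AutZ G -> x \in V -> TT (fphi G f x) = TT x.
Proof.
move=> fA /VspP [g gG ->]; rewrite fphiE // !TmapE ?AutZ_closed //.
by rewrite -AutX ?AutZ_Aut // AutZ_fix // powZ.
Qed.


Lemma Zcomm c d : c \in 'Z(G) -> d \in 'Z(G) -> commute c d.
Proof. by move=> cZ dZ; apply: Zcent => //; apply: ZG. Qed.

Lemma BV x y : x \in V -> y \in V -> BB x y \in 'Z(G).
Proof. by case/VspP=> g gG -> /VspP [h hG ->]; rewrite BformE // commZ. Qed.

Lemma BM1 x y u : x \in V -> y \in V -> u \in V -> BB (x * y) u = BB x u * BB y u.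
Proof.
case/VspP=> g gG -> /VspP [h hG ->] /VspP [k kG ->].
by rewrite -cosetM // !BformE ?groupM // commMl.
Qed.

Lemma BM2 x y u : x \in V -> y \in V -> u \in V -> BB u (x * y) = BB u x * BB u y.
Proof.
case/VspP=> g gG -> /VspP [h hG ->] /VspP [k kG ->].
by rewrite -cosetM // !BformE ?groupM // commMr.
Qed.

Lemma BX1 x u k : x \in V -> u \in V -> BB (x ^+ k) u = BB x u ^+ k.
Proof.
case/VspP=> g gG -> /VspP [h hG ->].
by rewrite -cosetX // !BformE ?groupX // commXl.
Qed.

Lemma BX2 x u k : x \in V -> u \in V -> BB u (x ^+ k) = BB u x ^+ k.
Proof.
case/VspP=> g gG -> /VspP [h hG ->].
by rewrite -cosetX // !BformE ?groupX // commXr.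
Qed.

Lemma BV1 x u : x \in V -> u \in V -> BB (x^-1) u = (BB x u)^-1.
Proof.
case/VspP=> g gG -> /VspP [h hG ->].
by rewrite -cosetV // !BformE ?groupV // commVl.
Qed.

Lemma Bsym x y : x \in V -> y \in V -> BB y x = (BB x y)^-1.
Proof. by case/VspP=> g gG -> /VspP [h hG ->]; rewrite !BformE // invg_comm. Qed.

Lemma Bxx x : x \in V -> BB x x = 1.
Proof. by case/VspP=> g gG ->; rewrite BformE // commgg. Qed.

Lemma Bx1 x : x \in V -> BB x 1 = 1.
Proof. by case/VspP=> g gG ->; rewrite -(morph1 (coset 'Z(G))) BformE // commg1. Qed.

Lemma TM x y : x \in V -> y \in V -> TT (x * y) = TT x * TT y.
Proof.
case/VspP=> g gG -> /VspP [h hG ->].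
by rewrite -cosetM // !TmapE ?groupM // powM.
Qed.

Lemma TX x k : x \in V -> TT (x ^+ k) = TT x ^+ k.
Proof.
case/VspP=> g gG ->.
by rewrite -cosetX // !TmapE ?groupX // -!expgM mulnC.
Qed.

Lemma TVi x : x \in V -> TT (x^-1) = (TT x)^-1.
Proof.
case/VspP=> g gG ->.
by rewrite -cosetV // !TmapE ?groupV // expgVn.
Qed.

Lemma T1 : TT 1 = 1.
Proof. by rewrite -(morph1 (coset 'Z(G))) TmapE // expg1n. Qed.

Lemma Vexp x : x \in V -> x ^+ p = 1.
Proof. by case/VspP=> g gG ->; rewrite -cosetX // coset_id // powZ. Qed.

Lemma VgroupM x y : x \in V -> y \in V -> x * y \in V.
Proof. exact: groupM. Qed.

Lemma VgroupX x k : x \in V -> x ^+ k \in V.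
Proof. exact: groupX. Qed.

Lemma VgroupV x : x \in V -> x^-1 \in V.
Proof. by rewrite /Vsp groupV. Qed.

Lemma step a x : a \in V -> x \in V -> TT a = 1 -> BB a x != 1 -> x * a \in Qorbit G x.
Proof.
case/VspP=> g gG -> /VspP [h hG ->]; rewrite TmapE // BformE // => gp ne.
have [f fA [m fh]] := trans_aut gG gp hG ne.
apply/QorbitP; exists f => //; rewrite fphiE // fh !cosetM ?groupM ?groupX ?(ZG zZ) //.
by rewrite (coset_id (groupX _ zZ)) mulg1.
Qed.

Lemma fphiX f x k : f \in AutZ G -> x \in V -> fphi G f (x ^+ k) = fphi G f x ^+ k.
Proof.
move=> fA /VspP [g gG ->]; rewrite -cosetX // !fphiE ?groupX //.
by rewrite AutX ?AutZ_Aut // cosetX // AutZ_closed.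
Qed.


Lemma B1x x : x \in V -> BB 1 x = 1.
Proof. by move=> xV; rewrite Bsym ?group1 // Bx1 ?invg1. Qed.

Variables (n : nat) (v w : nat -> coset_of 'Z(G)).
Hypothesis ssb : special_symplectic_basis G p z n v w.

Local Notation LC := (@lincomb _ G p n v w).

Lemma vV i : (i < n)%N -> v i \in V.
Proof. by case: ssb => [[h _ _] _ _ _] /h []. Qed.
Lemma wV i : (i < n)%N -> w i \in V.
Proof. by case: ssb => [[h _ _] _ _ _] /h []. Qed.
Lemma LC_inj : injective LC.
Proof. by case: ssb => [[_ h _] _ _ _]. Qed.
Lemma LC_surj x : x \in V -> exists c, LC c = x.
Proof. by case: ssb => [[_ _ h] _ _ _] /h. Qed.
Lemma Bvw i : (i < n)%N -> BB (v i) (w i) = z.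
Proof. by case: ssb => [_ h _ _] /h. Qed.
Lemma Bij i j : (i < n)%N -> (j < n)%N -> i != j ->
  [/\ BB (v i) (w j) = 1, BB (v i) (v j) = 1 & BB (w i) (w j) = 1].
Proof. by case: ssb => [_ _ h _] /h /[apply] /[apply]. Qed.
Lemma n_gt0 : (0 < n)%N.
Proof. by case: ssb => [_ _ _ []]. Qed.
Lemma Tv0 : TT (v 0%N) = z.
Proof. by case: ssb => [_ _ _ []]. Qed.
Lemma Tvi i : (0 < i < n)%N -> TT (v i) = 1.
Proof. by case: ssb => [_ _ _ [_ _ h _]] /h. Qed.
Lemma Twi i : (i < n)%N -> TT (w i) = 1.
Proof. by case: ssb => [_ _ _ [_ _ _ h]] /h. Qed.

Lemma prod_single (F : 'I_n -> coset_of 'Z(G)) j :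
  (forall i, i != j -> F i = 1) -> \prod_(i < n) F i = F j.
Proof.
move=> h; rewrite (eq_bigr (fun i => if i == j then F j else 1)).
  by rewrite -big_mkcond big_pred1_eq.
by move=> i _; case: eqP => [->|/eqP/h].
Qed.

Lemma prod_singleZ (F : 'I_n -> gT) j :
  (forall i, i != j -> F i = 1) -> \prod_(i < n) F i = F j.
Proof.
move=> h; rewrite (eq_bigr (fun i => if i == j then F j else 1)).
  by rewrite -big_mkcond big_pred1_eq.
by move=> i _; case: eqP => [->|/eqP/h].
Qed.

Lemma LCV c : LC c \in V.
Proof.
rewrite /lincomb; elim/big_rec: _ => [|i x _ xV]; first exact: group1.
by rewrite !VgroupM ?VgroupX ?vV ?wV.
Qed.

Lemma B_LC c u : u \in V ->
  BB (LC c) u = \prod_(i < n) (BB (v i) u ^+ (c i).1 * BB (w i) u ^+ (c i).2).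
Proof.
move=> uV.
suff : LC c \in V /\
  BB (LC c) u = \prod_(i < n) (BB (v i) u ^+ (c i).1 * BB (w i) u ^+ (c i).2) by case.
rewrite /lincomb.
apply: (big_rec2 (fun y1 y2 => y1 \in V /\ BB y1 u = y2)) => [|i y1 y2 _ [y1V <-]].
  by split; [exact: group1 | exact: B1x].
have vi := vV (ltn_ord i); have wi := wV (ltn_ord i).
split; first by rewrite !VgroupM ?VgroupX.
by rewrite !BM1 ?VgroupM ?VgroupX // !BX1.
Qed.

Lemma T_LC c :
  TT (LC c) = \prod_(i < n) (TT (v i) ^+ (c i).1 * TT (w i) ^+ (c i).2).
Proof.
suff : LC c \in V /\
  TT (LC c) = \prod_(i < n) (TT (v i) ^+ (c i).1 * TT (w i) ^+ (c i).2) by case.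
rewrite /lincomb.
apply: (big_rec2 (fun y1 y2 => y1 \in V /\ TT y1 = y2)) => [|i y1 y2 _ [y1V <-]].
  by split; [exact: group1 | exact: T1].
have vi := vV (ltn_ord i); have wi := wV (ltn_ord i).
split; first by rewrite !VgroupM ?VgroupX.
by rewrite !TM ?VgroupM ?VgroupX // !TX.
Qed.


Local Notation j0 := (Ordinal n_gt0).

Lemma B_LC_w c (j : 'I_n) : BB (LC c) (w j) = z ^+ (c j).1.
Proof.
have wj := wV (ltn_ord j).
rewrite B_LC // (prod_singleZ (j := j)) => [|i ij].
  by rewrite Bvw // Bxx // expg1n mulg1.
by have [-> _ ->] := Bij (ltn_ord i) (ltn_ord j) ij; rewrite !expg1n mulg1.
Qed.

Lemma B_LC_v c (j : 'I_n) : BB (LC c) (v j) = (z ^+ (c j).2)^-1.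
Proof.
have vj := vV (ltn_ord j); have wj := wV (ltn_ord j).
rewrite B_LC // (prod_singleZ (j := j)) => [|i ij].
  by rewrite Bxx // expg1n mul1g Bsym // Bvw // expgVn.
have wi := wV (ltn_ord i).
have [_ -> _] := Bij (ltn_ord i) (ltn_ord j) ij.
have ji : j != i by rewrite eq_sym.
have [e _ _] := Bij (ltn_ord j) (ltn_ord i) ji.
by rewrite Bsym // e invg1 !expg1n mulg1.
Qed.

Lemma T_LC0 c : TT (LC c) = z ^+ (c j0).1.
Proof.
rewrite T_LC (prod_singleZ (j := j0)) => [|i ij].
  by rewrite /= Tv0 (Twi n_gt0) expg1n mulg1.
have i0 : (0 < i < n)%N by rewrite ltn_ord andbT lt0n.
by rewrite Tvi // Twi // !expg1n mulg1.
Qed.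

Lemma LC_w0 (c : {ffun 'I_n -> 'I_p * 'I_p}) : (forall i, (c i).1 = 0%N :> nat) ->
  (forall i : 'I_n, i != j0 -> (c i).2 = 0%N :> nat) -> LC c = w 0%N ^+ (c j0).2.
Proof.
move=> h1 h2; rewrite /lincomb (prod_single (j := j0)) => [|i ij].
  by rewrite h1 expg0 mul1g.
by rewrite h1 h2 // !expg0 mulg1.
Qed.

Lemma T_B x : x \in V -> TT x = BB x (w 0%N).
Proof.
by move=> /LC_surj [c <-]; rewrite T_LC0 (B_LC_w c j0).
Qed.

Lemma nondeg x : x \in V -> x \notin <[w 0%N]> ->
  exists2 a, a \in V & TT a = 1 /\ BB x a != 1.
Proof.
move=> xV xw.
case: (boolP [exists a in V, (TT a == 1) && (BB x a != 1)]).
  by case/exists_inP => a aV /andP [/eqP Ta Ba]; exists a.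
rewrite negb_exists_in => /forall_inP H; case/negP: xw.
have [c ec] := LC_surj xV; rewrite -ec.
have h1 : forall i, (c i).1 = 0%N :> nat.
  move=> i; apply: zpow1; first exact: ltn_ord.
  have := H _ (wV (ltn_ord i)); rewrite Twi ?ltn_ord // eqxx /= negbK -ec B_LC_w.
  by move/eqP.
have h2 : forall i : 'I_n, i != j0 -> (c i).2 = 0%N :> nat.
  move=> i ij; apply: zpow1; first exact: ltn_ord.
  have i0 : (0 < i < n)%N by rewrite ltn_ord andbT lt0n.
  have := H _ (vV (ltn_ord i)); rewrite Tvi // eqxx /= negbK -ec B_LC_v.
  by rewrite invg_eq1 => /eqP.
by rewrite LC_w0 // mem_cycle.
Qed.


Lemma step2 x y : x \in V -> y \in V -> TT x = TT y -> BB y x != 1 -> y \in Qorbit G x.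
Proof.
move=> xV yV Txy Byx.
have dV : x^-1 * y \in V by rewrite VgroupM ?VgroupV.
have := step dV xV; rewrite mulKVg; apply.
  by rewrite TM ?VgroupV // TVi // Txy mulVg.
by rewrite BM1 ?VgroupV // BV1 // Bxx // invg1 mul1g.
Qed.

Lemma inw_T x : x \in <[w 0%N]> -> TT x = 1.
Proof.
by case/cycleP => k ->; rewrite TX ?wV ?n_gt0 // Twi ?n_gt0 // expg1n.
Qed.

Lemma core x y : x \in V -> y \in V -> x \notin <[w 0%N]> -> y \notin <[w 0%N]> ->
  TT x = TT y -> y \in Qorbit G x.
Proof.
move=> xV yV xw yw Txy.
case: (boolP (BB y x != 1)) => [|/negPn/eqP Byx]; first exact: step2.
have [a1 a1V [Ta1 [Bxa Bya]]] : exists2 a1, a1 \in V & TT a1 = 1 /\ BB x a1 != 1 /\ BB y a1 != 1.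
  have [a aV [Ta Bxa]] := nondeg xV xw; have [b bV [Tb Byb]] := nondeg yV yw.
  case: (boolP (BB y a != 1)) => [Bya|/negPn/eqP Bya]; first by exists a.
  case: (boolP (BB x b != 1)) => [Bxb|/negPn/eqP Bxb]; first by exists b.
  exists (a * b); first exact: VgroupM.
  by rewrite TM // Ta Tb mulg1 !BM2 // Bya Bxb mulg1 mul1g.
have x'V : x * a1 \in V by apply: VgroupM.
have h1 : x * a1 \in Qorbit G x.
  by apply: step => //; rewrite Bsym // invg_eq1.
apply: (orbit_trans xV h1); apply: step2 => //.
  by rewrite (TM xV a1V) Ta1 mulg1.
by rewrite (BM2 xV a1V yV) Byx mul1g.
Qed.

Lemma part_i x y : x \in V :\ 1 -> y \in V :\ 1 -> x != y -> TT x = TT y ->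
  (TT x != 1 /\ TT y != 1) \/ (x \notin <[w 0%N]> /\ y \notin <[w 0%N]>) ->
  y \in Qorbit G x.
Proof.
move=> /setD1P [_ xV] /setD1P [_ yV] _ Txy h.
have [xw yw] : x \notin <[w 0%N]> /\ y \notin <[w 0%N]>.
  case: h => // [[Tx Ty]]; split; apply: contra Tx => /inw_T /eqP //.
  by rewrite Txy.
exact: core.
Qed.


Lemma AutR f g h : f \in Aut G -> g \in G -> h \in G -> f [~ g, h] = [~ f g, f h].
Proof. by move=> fA gG hG; have := morphR (autm fA) gG hG; rewrite autmE. Qed.

Lemma w0_fix f : f \in AutZ G -> fphi G f (w 0%N) = w 0%N.
Proof.
move=> fA; have w0V := wV n_gt0; have [h hG ew] := VspP w0V.
rewrite ew fphiE //.
have key : forall g, g \in G -> [~ g, h] = g ^+ p.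
  by move=> g gG; rewrite -BformE // -ew -T_B ?csV // TmapE.
have fhG : f h \in G by apply: AutZ_closed.
have key2 : forall g, g \in G -> [~ g, f h] = [~ g, h].
  move=> g gG; have g'G : f^-1 g \in G by apply: AutZ_closed => //; apply: AutZV.
  rewrite -{1}(permKV f g) -AutR ?AutZ_Aut // AutZ_fix ?commZ // key //.
  by rewrite -(AutZ_fix fA (powZ g'G)) AutX ?AutZ_Aut // permKV key.
have dZ : f h * h^-1 \in 'Z(G).
  apply/centerP; split; first by rewrite groupM ?groupV.
  move=> g gG; apply: commute_sym; apply/commgP.
  by rewrite commMr ?groupV // commVr // key2 // mulgV.
by rewrite -(coset_kerl h dZ) mulgKV.
Qed.


Lemma orbit_w0 b : Qorbit G (w 0%N ^+ b) = [set w 0%N ^+ b].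
Proof.
have w0V := wV n_gt0.
apply/setP => y; rewrite inE; apply/idP/eqP => [/QorbitP [f fA ->]|->].
  by rewrite fphiX // w0_fix.
by apply: orbit_refl; apply: VgroupX.
Qed.

Lemma orbit_T x y : x \in V -> y \in Qorbit G x -> TT y = TT x.
Proof. by move=> xV /QorbitP [f fA ->]; apply: T_inv. Qed.

Lemma w0_ne1 : w 0%N != 1.
Proof.
apply: contra nz1 => /eqP e; have := Bvw n_gt0; rewrite e Bx1 ?vV ?n_gt0 //.
by move=> <-.
Qed.

Lemma order_w0 : #[w 0%N] = p.
Proof.
have : (#[w 0%N] %| p)%N by rewrite order_dvdn Vexp ?wV ?n_gt0.
case/primeP: pr_p => _ /[apply] /orP [|/eqP //].
by rewrite order_eq1 (negbTE w0_ne1).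
Qed.

Lemma w0pow_inj b b' : (b < p)%N -> (b' < p)%N -> w 0%N ^+ b = w 0%N ^+ b' -> b = b'.
Proof.
move=> bp b'p /eqP; rewrite eq_expg_mod_order order_w0 !modn_small //.
by move/eqP.
Qed.

Lemma Tv0a a : TT (v 0%N ^+ a) = z ^+ a.
Proof. by rewrite TX ?vV ?n_gt0 // Tv0. Qed.

Lemma v0a_props (a : nat) : (0 < a < p)%N ->
  [/\ v 0%N ^+ a \in V :\ 1, v 0%N ^+ a \notin <[w 0%N]> & TT (v 0%N ^+ a) != 1].
Proof.
case/andP=> a0 ap.
have Tn : TT (v 0%N ^+ a) != 1.
  rewrite Tv0a; apply/eqP => /(zpow1 ap) a00; by rewrite a00 in a0.
split => //; last by apply: contra Tn => /inw_T ->.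
rewrite !inE VgroupX ?vV ?n_gt0 // andbT; apply: contra Tn => /eqP ->.
by rewrite T1.
Qed.

Lemma cardV : #|V| = (p ^ (2 * n))%N.
Proof.
have -> : V = LC @: setT.
  apply/eqP; rewrite eqEsubset; apply/andP; split; apply/subsetP => x.
    by move/LC_surj => [c <-]; apply: imset_f.
  by case/imsetP => c _ ->; apply: LCV.
rewrite card_imset; last exact: LC_inj.
by rewrite cardsT card_ffun card_prod !card_ord mulnn -expnM.
Qed.

Lemma cardG : #|G| = (p * #|V|)%N.
Proof.
rewrite /Vsp card_quotient ?GnormZ // -cardZ Lagrange //; exact: center_sub.
Qed.

Lemma cardG_pow : #|G| = (p ^ (2 * n).+1)%N.
Proof. by rewrite cardG cardV expnS. Qed.

Lemma ker_n1 u : n = 1%N -> u \in V -> TT u = 1 -> u \in <[w 0%N]>.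
Proof.
move=> n1 uV Tu; have [c ec] := LC_surj uV; rewrite -ec.
have allj0 : forall i : 'I_n, i = j0.
  by move=> i; apply: val_inj => /=; have := ltn_ord i; rewrite {2}n1; case: (val i).
have h1 : forall i, (c i).1 = 0%N :> nat.
  move=> i; rewrite (allj0 i); apply: zpow1; first exact: ltn_ord.
  by rewrite -T_LC0 ec.
rewrite LC_w0 ?mem_cycle // => i; by rewrite (allj0 i) eqxx.
Qed.

Lemma v1_props : (1 < n)%N ->
  [/\ v 1%N \in V :\ 1, v 1%N \notin <[w 0%N]> & TT (v 1%N) = 1].
Proof.
move=> n1; have v1V := vV n1; have w1V := wV n1.
have B1 := Bvw n1.
split; last by rewrite Tvi.
  rewrite !inE v1V andbT; apply: contra nz1 => /eqP e.
  by rewrite -B1 e B1x.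
apply/negP => /cycleP [k ek]; move: B1; rewrite ek BX1 ?wV ?n_gt0 //.
have [_ _ ->] := Bij n_gt0 n1 (isT : 0%N != 1%N); rewrite expg1n => z1.
by move: nz1; rewrite -z1 eqxx.
Qed.


Lemma classify u : u \in V :\ 1 ->
  [\/ exists2 a : 'I_p, (0 < a)%N & Qorbit G u = Qorbit G (v 0%N ^+ a),
      exists2 b : 'I_p, (0 < b)%N & Qorbit G u = Qorbit G (w 0%N ^+ b)
    | u \notin <[w 0%N]> /\ TT u = 1].
Proof.
move=> /setD1P [u1 uV].
case: (boolP (TT u == 1)) => [/eqP Tu | Tu].
  case: (boolP (u \in <[w 0%N]>)) => [uw|uw]; last by apply: Or33.
  have [b bp eb] := cyclePmin uw; rewrite order_w0 in bp.
  apply: Or32; exists (Ordinal bp) => /=; last by rewrite eb.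
  by rewrite lt0n; apply: contra u1 => /eqP b0; rewrite eb b0.
have [a ap ea] := inZ (TmapV uV).
have a0 : (0 < a)%N by rewrite lt0n; apply: contra Tu => /eqP a0; rewrite ea a0.
have [/setD1P [_ vaV] vw vT] := v0a_props (introT andP (conj a0 ap)).
apply: Or31; exists (Ordinal ap) => //=.
have uw : u \notin <[w 0%N]> by apply: contra Tu => /inw_T ->.
by apply/esym/orbit_eq => //; apply: core => //; rewrite Tv0a.
Qed.

Local Notation Aset := [set Qorbit G (v 0%N ^+ a) | a : 'I_p & (0 < a)%N].
Local Notation Bset := [set Qorbit G (w 0%N ^+ b) | b : 'I_p & (0 < b)%N].

Lemma card_pos : #|[set a : 'I_p | (0 < a)%N]| = p.-1.
Proof.
have p0 := prime_gt0 pr_p.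
have -> : [set a : 'I_p | (0 < a)%N] = [set~ Ordinal p0] by apply/setP => a; rewrite !inE lt0n.
by rewrite cardsC1 card_ord.
Qed.

Lemma cardA : #|Aset| = p.-1.
Proof.
rewrite card_in_imset ?card_pos // => a a' ha ha' e.
have vV0 : v 0%N ^+ a \in V by rewrite VgroupX ?vV ?n_gt0.
have : v 0%N ^+ a' \in Qorbit G (v 0%N ^+ a).
  by rewrite e; apply: orbit_refl; rewrite VgroupX ?vV ?n_gt0.
move/(orbit_T vV0); rewrite !Tv0a => /(z_inj (ltn_ord _) (ltn_ord _)) e'.
by apply: val_inj.
Qed.

Lemma cardB : #|Bset| = p.-1.
Proof.
rewrite card_in_imset ?card_pos // => b b' hb hb'; rewrite !orbit_w0 => /set1_inj.
by move/(w0pow_inj (ltn_ord _) (ltn_ord _)) => e; apply: val_inj.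
Qed.


Lemma w0b_props (b : nat) : (0 < b < p)%N -> w 0%N ^+ b \in V :\ 1.
Proof.
case/andP=> b0 bp; rewrite !inE VgroupX ?wV ?n_gt0 // andbT.
apply/eqP => e; have := w0pow_inj bp (prime_gt0 pr_p) (etrans e (esym (expg0 _))).
by move=> b00; rewrite b00 in b0.
Qed.

Lemma disjAB : Aset :&: Bset = set0.
Proof.
apply/setP => X; rewrite !inE; apply/negbTE/negP => /andP [/imsetP [a ha ->] /imsetP [b hb e]].
have vaV : v 0%N ^+ a \in V by rewrite VgroupX ?vV ?n_gt0.
have : w 0%N ^+ b \in Qorbit G (v 0%N ^+ a) by rewrite e orbit_w0 set11.
move/(orbit_T vaV); rewrite Tv0a TX ?wV ?n_gt0 // Twi ?n_gt0 // expg1n => /esym.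
move/(zpow1 (ltn_ord a)) => a0; by move: ha; rewrite inE a0.
Qed.

Lemma QorbitsE_sub u : u \in V :\ 1 -> Qorbit G u \in Qorbits G.
Proof. by move=> h; apply: imset_f. Qed.

Lemma inA (a : 'I_p) : (0 < a)%N -> Qorbit G (v 0%N ^+ a) \in Aset.
Proof. by move=> a0; apply: imset_f; rewrite inE. Qed.

Lemma inB (b : 'I_p) : (0 < b)%N -> Qorbit G (w 0%N ^+ b) \in Bset.
Proof. by move=> b0; apply: imset_f; rewrite inE. Qed.

Lemma AB_sub X : X \in Aset :|: Bset -> X \in Qorbits G.
Proof.
case/setUP => /imsetP [a ha ->]; apply: QorbitsE_sub; move: ha; rewrite inE => a0.
  by have [] := v0a_props (introT andP (conj a0 (ltn_ord a))).
exact: w0b_props (introT andP (conj a0 (ltn_ord a))).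
Qed.

Lemma part_ii : #|G| = (p ^ 3)%N ->
  #|Qorbits G| = (2 * p - 2)%N /\ Qorbits G = Aset :|: Bset.
Proof.
move=> cG; have n1 : n = 1%N.
  move: cG; rewrite cardG_pow => /eqP; rewrite eqn_exp2l ?(prime_gt1 pr_p) //.
  by move/eqP; lia.
have E : Qorbits G = Aset :|: Bset.
  apply/setP => X; apply/idP/idP; last exact: AB_sub.
  case/imsetP => u uV1 ->; case: (classify uV1) => [[a a0 ->]|[b b0 ->]|[uw Tu]].
  - by apply/setUP; left; apply: inA.
  - by apply/setUP; right; apply: inB.
  - by case/setD1P: uV1 => _ uV; rewrite ker_n1 in uw.
split=> //; rewrite E cardsU disjAB cards0 cardA cardB.
by have := prime_gt1 pr_p; lia.
Qed.

Lemma part_iii : (p ^ 3 < #|G|)%N ->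
  #|Qorbits G| = (2 * p - 1)%N /\
  Qorbits G = Aset :|: Bset :|: [set Qorbit G (v 1%N)].
Proof.
move=> cG; have n2 : (1 < n)%N.
  by move: cG; rewrite cardG_pow ltn_exp2l ?(prime_gt1 pr_p) //; lia.
have [v1V1 v1w Tv1] := v1_props n2.
have v1V : v 1%N \in V by case/setD1P: v1V1.
have E : Qorbits G = Aset :|: Bset :|: [set Qorbit G (v 1%N)].
  apply/setP => X; apply/idP/idP.
    case/imsetP => u uV1 ->; case: (classify uV1) => [[a a0 ->]|[b b0 ->]|[uw Tu]].
    - by rewrite !inE inA.
    - by rewrite !inE inB ?orbT.
    have uV : u \in V by case/setD1P: uV1.
    rewrite !inE; apply/orP; right; apply/eqP.
    by apply/esym/orbit_eq => //; apply: core => //; rewrite Tv1.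
  case/setUP => [hAB|]; first exact: AB_sub hAB.
  rewrite inE => /eqP ->; exact: QorbitsE_sub.
have disjC : (Aset :|: Bset) :&: [set Qorbit G (v 1%N)] = set0.
  apply/setP => X; rewrite !inE; apply/negbTE/negP => /andP [hX /eqP eX].
  move: hX; rewrite eX => /orP [] /imsetP [a ha e].
    have : v 1%N \in Qorbit G (v 0%N ^+ a) by rewrite -e orbit_refl.
    move/(orbit_T (VgroupX _ (vV n_gt0))); rewrite Tv0a Tv1 => /esym.
    move/(zpow1 (ltn_ord a)) => a0; by move: ha; rewrite inE a0.
  have : v 1%N \in Qorbit G (w 0%N ^+ a) by rewrite -e orbit_refl.
  rewrite orbit_w0 inE => /eqP e1; by rewrite e1 mem_cycle in v1w.
split=> //; rewrite E cardsU disjC cards0 cards1 cardsU disjAB cards0 cardA cardB.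
by have := prime_gt1 pr_p; lia.
Qed.

End Basic.

Theorem lemma4p7 (gT : finGroupType) (G : {group gT}) (p : nat)
  (z : gT) (n : nat) (v w : nat -> coset_of 'Z(G)) :
  prime p -> odd p -> p.-group G -> extraspecial G -> exponent G = (p ^ 2)%N ->
  z \in 'Z(G) -> z != 1 ->
  special_symplectic_basis G p z n v w ->
  [/\ (* (i) *)
      (forall x y, x \in Vsp G :\ 1 -> y \in Vsp G :\ 1 -> x != y ->
         Tmap p x = Tmap p y ->
         (Tmap p x != 1 /\ Tmap p y != 1) \/ (x \notin <[w 0%N]> /\ y \notin <[w 0%N]>) ->
         y \in Qorbit G x),
      (* (ii) *)
      (#|G| = (p ^ 3)%N ->
         #|Qorbits G| = (2 * p - 2)%N /\
         Qorbits G = [set Qorbit G (v 0%N ^+ a) | a : 'I_p & (0 < a)%N]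
                 :|: [set Qorbit G (w 0%N ^+ b) | b : 'I_p & (0 < b)%N])
    & (* (iii) *)
      ((p ^ 3 < #|G|)%N ->
         #|Qorbits G| = (2 * p - 1)%N /\
         Qorbits G = [set Qorbit G (v 0%N ^+ a) | a : 'I_p & (0 < a)%N]
                 :|: [set Qorbit G (w 0%N ^+ b) | b : 'I_p & (0 < b)%N]
                 :|: [set Qorbit G (v 1%N)])].
Proof.
move=> pr op pG esG _ zZ nz ssb; split.
- by move=> x y; apply: (part_i pr op pG esG zZ nz ssb).
- by move=> h; apply: (part_ii pr op pG esG zZ nz ssb).
- by move=> h; apply: (part_iii pr op pG esG zZ nz ssb).
Qed.
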